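(* Let $G=PSL_2(\mathbb R)\times PSL_2(\mathbb R)$ and $H=\{(x,x):x\in PSL_2(\mathbb R)\}$. For every $\lambda\in\mathbb R\setminus\{0,1\}$ the set $\{(\exp X,\exp(\lambda X)):X\in sl_2(\mathbb R)\}\subseteq G$ (the exponential image of $\mathbf m_\lambda=\{(X,\lambda X):X\in sl_2(\mathbb R)\}$) is not the image $\sigma(G/H)$ of a global sharply transitive section $\sigma:G/H\to G$.
   Context: A section $\sigma:G/H\to G$ with $\sigma(H)=1$ is sharply transitive if $\sigma(G/H)$ is a set of representatives of the left cosets of $H$ and for any cosets $aH,bH$ there is exactly one $z\in\sigma(G/H)$ with $zaH=bH$. Here $\exp$ denotes the exponential map $sl_2(\mathbb R)\to SL_2(\mathbb R)$ followed by the projection to $PSL_2(\mathbb R)$. The subspaces $\mathbf m_\lambda$, $\lambda\in\mathbb R\setminus\{0,1\}$, are complements to the diagonal Lie algebra $\mathbf h=\{(X,X)\}$ in $sl_2(\mathbb R)\oplus sl_2(\mathbb R)$ satisfying $[\mathbf h,\mathbf m_\lambda]\subseteq\mathbf m_\lambda$. *)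

(* Defs.v *)
From Stdlib Require Import Reals Factorial.
Open Scope R_scope.

Record M2 := mkM2 { m11 : R; m12 : R; m21 : R; m22 : R }.

Definition mmul (A B : M2) : M2 :=
  mkM2 (m11 A * m11 B + m12 A * m21 B) (m11 A * m12 B + m12 A * m22 B)
       (m21 A * m11 B + m22 A * m21 B) (m21 A * m12 B + m22 A * m22 B).
Definition mid : M2 := mkM2 1 0 0 1.
Definition mopp (A : M2) : M2 := mkM2 (- m11 A) (- m12 A) (- m21 A) (- m22 A).
Definition mscal (c : R) (A : M2) : M2 := mkM2 (c * m11 A) (c * m12 A) (c * m21 A) (c * m22 A).
Definition mdet (A : M2) : R := m11 A * m22 A - m12 A * m21 A.
Definition mtr (A : M2) : R := m11 A + m22 A.
(* adjugate = inverse for determinant-one matrices *)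
Definition madj (A : M2) : M2 := mkM2 (m22 A) (- m12 A) (- m21 A) (m11 A).

Fixpoint mpow (A : M2) (n : nat) : M2 :=
  match n with O => mid | S k => mmul A (mpow A k) end.

Definition in_sl2 (X : M2) : Prop := mtr X = 0.

Definition exp_is (X E : M2) : Prop :=
  forall f : M2 -> R, (f = m11 \/ f = m12 \/ f = m21 \/ f = m22) ->
    Un_cv (fun n => sum_f_R0 (fun k => f (mpow X k) / INR (fact k)) n) (f E).

(* SL_2(R) and PSL_2(R) = SL_2(R)/{+-I}: an element of PSL_2(R) is represented
   by a matrix of SL_2(R); two representatives denote the same element iff
   they agree up to sign. *)
Definition in_SL2 (A : M2) : Prop := mdet A = 1.
Definition peq (A B : M2) : Prop := A = B \/ A = mopp B.

(* G = PSL_2(R) x PSL_2(R), represented by pairs of SL_2(R) matrices *)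
Definition Gt := (M2 * M2)%type.
Definition inG (g : Gt) : Prop := in_SL2 (fst g) /\ in_SL2 (snd g).
Definition Geq (g h : Gt) : Prop := peq (fst g) (fst h) /\ peq (snd g) (snd h).
Definition Gmul (g h : Gt) : Gt := (mmul (fst g) (fst h), mmul (snd g) (snd h)).
Definition Ginv (g : Gt) : Gt := (madj (fst g), madj (snd g)).
Definition G1 : Gt := (mid, mid).

Definition inH (g : Gt) : Prop := inG g /\ peq (fst g) (snd g).

Definition same_coset (g g' : Gt) : Prop := inH (Gmul (Ginv g) g').

(* A section sigma : G/H -> G is modelled as a map on representatives that
   only depends on the left coset gH and returns an element of gH. *)
Definition is_section (sigma : Gt -> Gt) : Prop :=
  (forall g, inG g -> inG (sigma g) /\ same_coset g (sigma g)) /\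
  (forall g g', inG g -> inG g' -> same_coset g g' -> Geq (sigma g) (sigma g')).

Definition in_image (sigma : Gt -> Gt) (z : Gt) : Prop :=
  exists g, inG g /\ Geq z (sigma g).

Definition sharply_transitive_section (sigma : Gt -> Gt) : Prop :=
  is_section sigma /\
  Geq (sigma G1) G1 /\
  (forall a b, inG a -> inG b ->
     (exists z, in_image sigma z /\ same_coset (Gmul z a) b) /\
     (forall z z', in_image sigma z -> in_image sigma z' ->
        same_coset (Gmul z a) b -> same_coset (Gmul z' a) b -> Geq z z')).

Definition exp_m (lam : R) (g : Gt) : Prop :=
  exists X E1 E2, in_sl2 X /\ exp_is X E1 /\ exp_is (mscal lam X) E2 /\
    Geq g (E1, E2).

(* Main.v *)
Require Import Defs.
From Stdlib Require Import Reals.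
From Stdlib Require Import Lra Lia Psatz Cos_rel Factorial.
Open Scope R_scope.

Definition Rot (t : R) : M2 := mkM2 (cos t) (- sin t) (sin t) (cos t).
Definition Xr (t : R) : M2 := mkM2 0 (- t) t 0.
Definition Xn (s : R) : M2 := mkM2 0 s 0 0.
Definition Un (s : R) : M2 := mkM2 1 s 0 1.
Definition Z0 : M2 := mkM2 0 0 0 0.

Lemma mpow_rot t i : mpow (Xr t) (2*i) = mkM2 ((-1)^i*(t*t)^i) 0 0 ((-1)^i*(t*t)^i) /\
  mpow (Xr t) (S (2*i)) = mkM2 0 (-(t*((-1)^i*(t*t)^i))) (t*((-1)^i*(t*t)^i)) 0.
Proof.
  induction i.
  - split; simpl; unfold mmul, mid, Xr; simpl; f_equal; ring.
  - destruct IHi as [He Ho].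
    assert (E : (2 * S i = S (S (2*i)))%nat) by lia.
    rewrite E. split.
    + change (mpow (Xr t) (S (S (2*i)))) with (mmul (Xr t) (mpow (Xr t) (S (2*i)))).
      rewrite Ho. unfold mmul, Xr; simpl. f_equal; ring.
    + change (mpow (Xr t) (S (S (S (2*i))))) with
        (mmul (Xr t) (mmul (Xr t) (mpow (Xr t) (S (2*i))))).
      rewrite Ho. unfold mmul, Xr; simpl. f_equal; ring.
Qed.

Lemma cv_evenodd (P C D : nat -> R) l : (forall i, P (2*i)%nat = C i) ->
  (forall i, P (S (2*i)) = D i) -> Un_cv C l -> Un_cv D l -> Un_cv P l.
Proof.
  intros HC HD cC cD eps He.
  destruct (cC eps He) as [N1 H1]. destruct (cD eps He) as [N2 H2].
  exists (2*(N1+N2))%nat. intros n Hn.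
  destruct (Nat.Even_or_Odd n) as [[i ->]|[i ->]].
  - rewrite HC. apply H1. lia.
  - replace (2*i+1)%nat with (S (2*i)) by lia. rewrite HD; apply H2; lia.
Qed.

Lemma cv_evenodd2 (P D : nat -> R) l :
  (forall i, P (S (2*i)) = D i) -> (forall i, P (2 * S i)%nat = D i) ->
  Un_cv D l -> Un_cv P l.
Proof.
  intros HD HE cD eps He.
  destruct (cD eps He) as [N2 H2].
  exists (2*(S N2))%nat. intros n Hn.
  destruct (Nat.Even_or_Odd n) as [[i ->]|[i ->]].
  - destruct i as [|i]; [lia|]. rewrite HE; apply H2; lia.
  - replace (2*i+1)%nat with (S (2*i)) by lia. rewrite HD; apply H2; lia.
Qed.

Lemma cos_sum (X : M2) (f : M2 -> R) t :
  (forall n i, n = (2*i)%nat -> f (mpow X n) = (-1)^i*(t*t)^i) ->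
  (forall n i, n = S (2*i) -> f (mpow X n) = 0) ->
  forall i, sum_f_R0 (fun k => f (mpow X k) / INR (fact k)) (2*i) = A1 t i /\
            sum_f_R0 (fun k => f (mpow X k) / INR (fact k)) (S (2*i)) = A1 t i.
Proof.
  intros Hev Hod. induction i.
  - assert (H0 : sum_f_R0 (fun k => f (mpow X k) / INR (fact k)) (2*0) = A1 t 0).
    { change (2*0)%nat with 0%nat. cbn [sum_f_R0].
      rewrite (Hev 0%nat 0%nat) by reflexivity. unfold A1; simpl. field. }
    split; [exact H0|]. rewrite tech5, H0. cbv beta.
    rewrite (Hod _ 0%nat) by reflexivity. unfold Rdiv; ring.
  - destruct IHi as [He Ho].
    assert (E : (2 * S i = S (S (2*i)))%nat) by lia.
    assert (H0 : sum_f_R0 (fun k => f (mpow X k) / INR (fact k)) (2*S i) = A1 t (S i)).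
    { rewrite E, tech5, Ho. rewrite <- E.
      rewrite (Hev _ (S i)) by reflexivity.
      unfold A1. rewrite (tech5 _ i).
      rewrite pow_mult. replace (t^2) with (t*t) by ring. unfold Rdiv; ring. }
    split; [exact H0|]. rewrite tech5, H0. cbv beta.
    rewrite (Hod _ (S i)) by reflexivity. unfold Rdiv; ring.
Qed.

Lemma sin_sum (X : M2) (f : M2 -> R) t s :
  (forall n i, n = (2*i)%nat -> f (mpow X n) = 0) ->
  (forall n i, n = S (2*i) -> f (mpow X n) = s*(t*((-1)^i*(t*t)^i))) ->
  forall i, sum_f_R0 (fun k => f (mpow X k) / INR (fact k)) (S (2*i)) = s * B1 t i.
Proof.
  intros Hev Hod. induction i.
  - change (S (2*0)) with 1%nat. cbn [sum_f_R0].
    rewrite (Hev 0%nat 0%nat) by reflexivity.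
    rewrite (Hod 1%nat 0%nat) by reflexivity. unfold B1; simpl. field.
  - replace (S (2 * S i)) with (S (S (S (2*i)))) by lia.
    rewrite tech5, tech5, IHi.
    rewrite (Hev _ (S i)) by lia. rewrite (Hod _ (S i)) by lia.
    unfold B1. rewrite (tech5 _ i).
    rewrite pow_add, pow_mult. replace (t^2) with (t*t) by ring.
    replace (2 * S i + 1)%nat with (S (S (S (2*i)))) by lia.
    unfold Rdiv; simpl pow; ring.
Qed.

Lemma cv_const s : Un_cv (fun _ => s) s.
Proof. intros eps He. exists 0%nat. intros. rewrite R_dist_eq. exact He. Qed.

Lemma exp_rot t : exp_is (Xr t) (Rot t).
Proof.
  intros f Hf.
  assert (Hc : forall f, (forall A, f A = m11 A) \/ (forall A, f A = m22 A) ->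
    Un_cv (fun n => sum_f_R0 (fun k => f (mpow (Xr t) k) / INR (fact k)) n) (cos t)).
  { intros g Hg.
    assert (HH := cos_sum (Xr t) g t).
    apply (cv_evenodd _ (A1 t) (A1 t)).
    - intro i; apply HH; intros n j ->; destruct Hg as [Hg|Hg]; rewrite Hg;
        destruct (mpow_rot t j) as [E1 E2]; rewrite ?E1, ?E2; reflexivity.
    - intro i; apply HH; intros n j ->; destruct Hg as [Hg|Hg]; rewrite Hg;
        destruct (mpow_rot t j) as [E1 E2]; rewrite ?E1, ?E2; reflexivity.
    - apply A1_cvg.
    - apply A1_cvg. }
  assert (Hs : forall f s, (forall A, f A = m12 A) /\ s = -1 \/ (forall A, f A = m21 A) /\ s = 1 ->
    Un_cv (fun n => sum_f_R0 (fun k => f (mpow (Xr t) k) / INR (fact k)) n) (s * sin t)).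
  { intros g s Hg.
    assert (HH : forall i, sum_f_R0 (fun k => g (mpow (Xr t) k) / INR (fact k)) (S (2*i)) = s * B1 t i).
    { apply sin_sum.
      - intros n j ->; destruct Hg as [[Hg _]|[Hg _]]; rewrite Hg;
        destruct (mpow_rot t j) as [E1 E2]; rewrite ?E1, ?E2; reflexivity.
      - intros n j ->; destruct Hg as [[Hg ->]|[Hg ->]]; rewrite Hg;
        destruct (mpow_rot t j) as [E1 E2]; rewrite ?E1, ?E2; simpl; ring. }
    apply (cv_evenodd2 _ (fun i => s * B1 t i)).
    - exact HH.
    - intro i. replace (2 * S i)%nat with (S (S (2*i))) by lia.
      rewrite tech5, HH.
      replace (S (S (2*i))) with (2 * S i)%nat by lia.
      destruct (mpow_rot t (S i)) as [E1 E2]. rewrite E1.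
      destruct Hg as [[Hg _]|[Hg _]]; rewrite Hg; simpl m12; simpl m21; unfold Rdiv; ring.
    - apply (CV_mult (fun _ => s) (B1 t)). apply cv_const. apply B1_cvg. }
  destruct Hf as [ H | [ H | [ H | H ] ] ]; subst f.
  - apply Hc; left; reflexivity.
  - replace (m12 (Rot t)) with (-1 * sin t) by (simpl; ring).
    apply Hs; left; split; reflexivity.
  - replace (m21 (Rot t)) with (1 * sin t) by (simpl; ring).
    apply Hs; right; split; reflexivity.
  - apply Hc; right; reflexivity.
Qed.

Lemma mmul_mid_r A : mmul A mid = A.
Proof. destruct A; unfold mmul, mid; simpl; f_equal; ring. Qed.

Lemma mpow_nil s k : mpow (Xn s) (S (S k)) = Z0.
Proof.
  induction k.
  - unfold mpow, mmul, mid, Xn, Z0; simpl; f_equal; ring.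
  - change (mpow (Xn s) (S (S (S k)))) with (mmul (Xn s) (mpow (Xn s) (S (S k)))).
    rewrite IHk. unfold mmul, Xn, Z0; simpl; f_equal; ring.
Qed.

Lemma exp_nil s : exp_is (Xn s) (Un s).
Proof.
  assert (G : forall f : M2 -> R, f Z0 = 0 -> f (Un s) = f mid + f (Xn s) ->
     Un_cv (fun n => sum_f_R0 (fun k => f (mpow (Xn s) k) / INR (fact k)) n) (f (Un s))).
  { intros f H0 HL.
    assert (HS : forall n, sum_f_R0 (fun k => f (mpow (Xn s) k) / INR (fact k)) (S n) = f (Un s)).
    { induction n.
      - cbn [sum_f_R0 mpow]. rewrite mmul_mid_r, HL. simpl. field.
      - rewrite tech5, IHn. cbv beta. rewrite mpow_nil, H0. unfold Rdiv; ring. }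
    intros eps He. exists 1%nat. intros n Hn. destruct n as [|n]; [lia|].
    rewrite HS, R_dist_eq. exact He. }
  intros f Hf. destruct Hf as [ H | [ H | [ H | H ] ] ]; subst f; apply G;
    simpl; ring.
Qed.

Lemma mdet_mul A B : mdet (mmul A B) = mdet A * mdet B.
Proof. destruct A, B; unfold mdet, mmul; simpl; ring. Qed.

Lemma madj_l A : mdet A = 1 -> mmul (madj A) A = mid.
Proof. destruct A; unfold mdet, mmul, madj, mid; simpl; intro H; f_equal; try rewrite <- H; ring. Qed.

Lemma inG_G1 : inG G1.
Proof. split; unfold in_SL2, mdet, G1, mid; simpl; ring. Qed.

Lemma peq_refl A : peq A A.
Proof. left; reflexivity. Qed.

Lemma Geq_refl g : Geq g g.
Proof. split; apply peq_refl. Qed.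

Lemma peq_sym A B : peq A B -> peq B A.
Proof.
  intros [H|H]; [left; auto|right; subst; destruct B; unfold mopp; simpl; f_equal; ring].
Qed.

Lemma mdet_rot t : mdet (Rot t) = 1.
Proof. unfold mdet, Rot; simpl. pose proof (sin2_cos2 t). unfold Rsqr in H. nra. Qed.

Lemma Ginv_l g : inG g -> Gmul (Ginv g) g = G1.
Proof.
  destruct g as [A B]; intros [H1 H2]; unfold Gmul, Ginv, G1; cbn [fst snd]; unfold in_SL2 in *; cbn [fst snd] in *.
  rewrite (madj_l _ H1), (madj_l _ H2); reflexivity.
Qed.

Theorem proposition8 (lam : R) (h0 : lam <> 0) (h1 : lam <> 1) :
  ~ exists sigma : Gt -> Gt,
      sharply_transitive_section sigma /\
      (forall z, inG z -> (in_image sigma z <-> exp_m lam z)).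
Proof.
  intros [sigma [[Hsec [Hs1 Htr]] Himg]].
  assert (HG1 : in_image sigma G1).
  { exists G1. split; [apply inG_G1|]. destruct Hs1 as [A B].
    split; apply peq_sym; assumption. }
  destruct (Rlt_or_le 0 lam) as [Hl|Hl].
  -
    set (d := sqrt lam).
    assert (Hd : 0 < d) by (apply sqrt_lt_R0; lra).
    assert (Hdd : d * d = lam) by (apply sqrt_sqrt; lra).
    set (z := (Un 1, Un lam)).
    assert (Hz : inG z) by (split; unfold in_SL2, mdet, z, Un; simpl; ring).
    assert (Hzi : in_image sigma z).
    { apply Himg; [exact Hz|]. exists (Xn 1), (Un 1), (Un lam).
      split; [unfold in_sl2, mtr, Xn; simpl; ring|].
      split; [apply exp_nil|].
      split; [|apply Geq_refl].
      replace (mscal lam (Xn 1)) with (Xn lam)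
        by (unfold mscal, Xn; simpl; f_equal; ring).
      apply exp_nil. }
    set (a := (mkM2 (/d) 0 0 d, mid)).
    assert (Ha : inG a).
    { split; unfold in_SL2, mdet, a, mid; simpl; [field; lra|ring]. }
    set (b := Gmul z a).
    assert (Hb : inG b).
    { split; unfold in_SL2, b, Gmul, z, a, Un, mid, mdet, mmul; simpl; field; lra. }
    assert (HC1 : same_coset (Gmul G1 a) b).
    { unfold same_coset, b.
      replace (Gmul (Ginv (Gmul G1 a)) (Gmul z a)) with (Un lam, Un lam).
      + split; [split; unfold in_SL2, mdet, Un; simpl; ring|apply peq_refl].
      + unfold Gmul, Ginv, G1, a, z, Un, mmul, madj, mid; simpl.
        f_equal; f_equal. all: try rewrite <- Hdd; field; lra. }
    assert (HC2 : same_coset (Gmul z a) b).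
    { unfold same_coset. fold b. rewrite (Ginv_l _ Hb).
      split; [apply inG_G1|apply peq_refl]. }
    destruct (proj2 (Htr a b Ha Hb) G1 z HG1 Hzi HC1 HC2) as [[E|E] _];
      unfold z, G1, Un, mid, mopp in E; simpl in E; injection E; intros; lra.
  -
    assert (Hl' : lam < 0) by lra.
    set (c := PI / (1 - lam)).
    assert (Hc : c * (1 - lam) = PI) by (unfold c; field; lra).
    pose proof PI_RGT_0 as Hpi.
    assert (Hc0 : 0 < c) by nra.
    assert (HcP : c < PI) by nra.
    assert (Hsin : 0 < sin c) by (apply sin_gt_0; lra).
    set (z := (Rot c, Rot (lam * c))).
    assert (Hz : inG z) by (split; apply mdet_rot).
    assert (Hzi : in_image sigma z).
    { apply Himg; [exact Hz|]. exists (Xr c), (Rot c), (Rot (lam * c)).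
      split; [unfold in_sl2, mtr, Xr; simpl; ring|].
      split; [apply exp_rot|].
      split; [|apply Geq_refl].
      replace (mscal lam (Xr c)) with (Xr (lam * c))
        by (unfold mscal, Xr; simpl; f_equal; ring).
      apply exp_rot. }
    assert (HC1 : same_coset (Gmul G1 G1) G1).
    { unfold same_coset.
      replace (Gmul (Ginv (Gmul G1 G1)) G1) with G1
        by (unfold Gmul, Ginv, G1, mmul, madj, mid; simpl; f_equal; f_equal; ring).
      split; [apply inG_G1|apply peq_refl]. }
    assert (Hlc : lam * c = c - PI) by lra.
    assert (HC2 : same_coset (Gmul z G1) G1).
    { unfold same_coset.
      replace (Gmul (Ginv (Gmul z G1)) G1) with (madj (Rot c), mopp (madj (Rot c))).
      + split.
        * split; unfold in_SL2; [|];
            rewrite <- (mdet_rot c); unfold mdet, madj, mopp, Rot; simpl; ring.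
        * right. destruct (Rot c); unfold mopp, madj; simpl; f_equal; ring.
      + unfold Gmul, Ginv, G1, z. simpl. rewrite !mmul_mid_r. rewrite Hlc.
        unfold Rot. rewrite cos_minus, sin_minus, cos_PI, sin_PI.
        unfold madj, mopp; simpl; f_equal; f_equal; ring. }
    destruct (proj2 (Htr G1 G1 inG_G1 inG_G1) G1 z HG1 Hzi HC1 HC2) as [[E|E] _];
      unfold z, G1, Rot, mid, mopp in E; simpl in E; injection E; intros; lra.
Qed.
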